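(* Let $R\in\mathcal L(\mathcal H)$, $u,v\in\mathcal H$, $T=R+(\cdot,v)u$, $V\in\mathcal L(\mathcal K)$, and $Y\in\mathcal L(\mathcal K,\mathcal H)$ with $\ker Y=\{0\}$ and $TY=YV$. If $v$ is a cyclic vector for $R^\ast$, then $Y^\ast v$ is a cyclic vector for $V^\ast$.
   Context: $(\cdot,v)u$ denotes $x\mapsto(x,v)u$. A vector $x$ is cyclic for an operator $A$ if the closed linear span of $\{A^nx:n\geq0\}$ is the whole space. *)

(* Defs.v *)
From HB Require Import structures.
From mathcomp Require Import all_boot all_order all_algebra.
From mathcomp Require Import all_classical all_reals all_analysis.
From mathcomp Require Import complex.
Set Implicit Arguments. Unset Strict Implicit. Unset Printing Implicit Defensive.
Import Order.TTheory GRing.Theory Num.Theory.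
Import numFieldNormedType.Exports.
Local Open Scope ring_scope.
Local Open Scope classical_set_scope.

Section Hilbert.
Variable R : realType.
Local Notation C := (R[i]).

(* Together with completeness this makes H a complex Hilbert space. *)
Definition hilbert_inner (H : completeNormedModType C) (ip : H -> H -> C) :=
  [/\ forall (a : C) (x y z : H), ip (a *: x + y) z = a * ip x z + ip y z,
      forall x y : H, ip y x = (ip x y)^*
    & forall x : H, `|x| ^+ 2 = ip x x].

Definition bounded_op (H K : completeNormedModType C) (f : H -> K) :=
  linear f /\ continuous f.

Definition is_adjoint (H K : completeNormedModType C)
  (ipH : H -> H -> C) (ipK : K -> K -> C) (T : H -> K) (Ts : K -> H) :=
  forall (x : H) (y : K), ipK (T x) y = ipH x (Ts y).

Definition lin_span (H : completeNormedModType C) (S : set H) : set H :=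
  [set y | exists (n : nat) (c : 'I_n -> C) (w : 'I_n -> H),
           (forall i, S (w i)) /\ y = \sum_(i < n) c i *: w i].

Definition cyclic_vector (H : completeNormedModType C) (A : H -> H) (x : H) :=
  closure (lin_span (range (fun n : nat => iter n A x))) = setT.

End Hilbert.

(* Main.v *)
Require Import Defs.
From HB Require Import structures.
From mathcomp Require Import all_boot all_order all_algebra.
From mathcomp Require Import all_classical all_reals all_analysis.
From mathcomp Require Import complex.
Import Order.TTheory GRing.Theory Num.Theory.
Import numFieldNormedType.Exports.
Local Open Scope ring_scope.
Local Open Scope classical_set_scope.

From mathcomp Require Import ring lra.
Set Implicit Arguments. Unset Strict Implicit. Unset Printing Implicit Defensive.
Local Notation Rc := complex.Re.
Local Notation Ic := complex.Im.

Lemma ip0l (R : realType) (E : completeNormedModType R[i]) (ip : E -> E -> R[i])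
  (hE : hilbert_inner ip) z : ip 0 z = 0.
Proof.
case: hE => h1 _ _; have := h1 1 0 0 z; rewrite scaler0 addr0 mul1r.
by move/(congr1 (fun t => t - ip 0 z)); rewrite subrr addrK.
Qed.

Lemma ipDl (R : realType) (E : completeNormedModType R[i]) (ip : E -> E -> R[i])
  (hE : hilbert_inner ip) x y z : ip (x + y) z = ip x z + ip y z.
Proof. by case: hE => h1 _ _; have := h1 1 x y z; rewrite scale1r mul1r. Qed.

Lemma ipZl (R : realType) (E : completeNormedModType R[i]) (ip : E -> E -> R[i])
  (hE : hilbert_inner ip) a x z : ip (a *: x) z = a * ip x z.
Proof.
have := hE; case => h1 _ _; have := h1 a x 0 z.
by rewrite addr0 (ip0l hE) addr0.
Qed.

Lemma ipC (R : realType) (E : completeNormedModType R[i]) (ip : E -> E -> R[i])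
  (hE : hilbert_inner ip) x y : ip y x = (ip x y)^*.
Proof. by case: hE. Qed.

Lemma ipxx (R : realType) (E : completeNormedModType R[i]) (ip : E -> E -> R[i])
  (hE : hilbert_inner ip) x : ip x x = `|x| ^+ 2.
Proof. by case: hE. Qed.

Lemma ipNl (R : realType) (E : completeNormedModType R[i]) (ip : E -> E -> R[i])
  (hE : hilbert_inner ip) x z : ip (- x) z = - ip x z.
Proof. by rewrite -scaleN1r (ipZl hE) mulN1r. Qed.

Lemma ipBl (R : realType) (E : completeNormedModType R[i]) (ip : E -> E -> R[i])
  (hE : hilbert_inner ip) x y z : ip (x - y) z = ip x z - ip y z.
Proof. by rewrite (ipDl hE) (ipNl hE). Qed.

Lemma ipDr (R : realType) (E : completeNormedModType R[i]) (ip : E -> E -> R[i])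
  (hE : hilbert_inner ip) x y z : ip x (y + z) = ip x y + ip x z.
Proof. by rewrite [LHS](ipC hE) [ip x y](ipC hE) [ip x z](ipC hE) (ipDl hE) rmorphD. Qed.

Lemma ipZr (R : realType) (E : completeNormedModType R[i]) (ip : E -> E -> R[i])
  (hE : hilbert_inner ip) a x z : ip x (a *: z) = a^* * ip x z.
Proof. by rewrite [LHS](ipC hE) [ip x z](ipC hE) (ipZl hE) rmorphM. Qed.

Lemma ipNr (R : realType) (E : completeNormedModType R[i]) (ip : E -> E -> R[i])
  (hE : hilbert_inner ip) x z : ip x (- z) = - ip x z.
Proof. by rewrite [LHS](ipC hE) [ip x z](ipC hE) (ipNl hE) rmorphN. Qed.

Lemma ipBr (R : realType) (E : completeNormedModType R[i]) (ip : E -> E -> R[i])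
  (hE : hilbert_inner ip) x y z : ip x (y - z) = ip x y - ip x z.
Proof. by rewrite (ipDr hE) (ipNr hE). Qed.

Lemma ip0r (R : realType) (E : completeNormedModType R[i]) (ip : E -> E -> R[i])
  (hE : hilbert_inner ip) z : ip z 0 = 0.
Proof. by rewrite (ipC hE) (ip0l hE) conjC0. Qed.

Lemma ip_suml (R : realType) (E : completeNormedModType R[i]) (ip : E -> E -> R[i])
  (hE : hilbert_inner ip) n (c : 'I_n -> R[i]) (w : 'I_n -> E) z :
  ip (\sum_(i < n) c i *: w i) z = \sum_(i < n) c i * ip (w i) z.
Proof.
rewrite (big_morph (fun t => ip t z) (fun a b => ipDl hE a b z) (ip0l hE z)).
by apply: eq_bigr => i _; rewrite (ipZl hE).
Qed.

Lemma ip_eq0 (R : realType) (E : completeNormedModType R[i]) (ip : E -> E -> R[i])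
  (hE : hilbert_inner ip) x : ip x x = 0 -> x = 0.
Proof. by rewrite (ipxx hE) => /eqP; rewrite expf_eq0 /= normr_eq0 => /eqP. Qed.

Lemma ReD (R : realType) (a b : R[i]) : Rc (a + b) = Rc a + Rc b.
Proof. by case: a; case: b. Qed.
Lemma ReB (R : realType) (a b : R[i]) : Rc (a - b) = Rc a - Rc b.
Proof. by case: a; case: b. Qed.
Lemma ReJ (R : realType) (a : R[i]) : Rc (a^*) = Rc a.
Proof. by case: a => ? ?; rewrite /Num.conj. Qed.
Lemma ReC (R : realType) (a : R) : Rc (a%:C)%C = a.
Proof. by []. Qed.
Lemma ReCM (R : realType) (a : R) (b : R[i]) : Rc ((a%:C)%C * b) = a * Rc b.
Proof. by case: b => ? ? /=; rewrite mul0r subr0. Qed.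

Lemma real_ge0 (R : realType) (z : R[i]) : 0 <= z -> z = (Rc z)%:C%C /\ 0 <= Rc z.
Proof. case: z => a b; rewrite lecE /= => /andP[/eqP -> a0]; by split. Qed.

Definition qn (R : realType) (E : completeNormedModType R[i]) (ip : E -> E -> R[i])
  (x : E) : R := Rc (ip x x).

Lemma qE (R : realType) (E : completeNormedModType R[i]) (ip : E -> E -> R[i])
  (hE : hilbert_inner ip) x : ip x x = (qn ip x)%:C%C /\ 0 <= qn ip x.
Proof. by rewrite /qn (ipxx hE); apply: real_ge0; apply: exprn_ge0. Qed.

Lemma qlt (R : realType) (E : completeNormedModType R[i]) (ip : E -> E -> R[i])
  (hE : hilbert_inner ip) x (r : R) : qn ip x < r ^+ 2 -> 0 < r -> `|x| < (r%:C)%C.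
Proof.
move: (normr_ge0 x) => /real_ge0 [hn hn0].
rewrite /qn (ipxx hE) hn -rmorphXn ReC ltcR => h1 h2; nra.
Qed.

Lemma cvg_Re (R : realType) (T : Type) (F : set_system T) (FF : Filter F)
  (f : T -> R[i]^o) (z : R[i]^o) : f @ F --> z -> (fun t => Rc (f t)) @ F --> Rc z.
Proof.
move/cvgrPdist_lt => H; apply/cvgrPdist_lt => e e0.
have e0' : 0 < (e%:C)%C :> R[i]^o by rewrite ltcR.
apply: filterS (H _ e0') => t ht.
rewrite -ReB.
have h2 := normc_ge_Re (z - f t).
move: ht h2; move: (z - f t) => w.
rewrite ltcE lecE /= => /andP[_ h3] /andP[_ h4].
exact: le_lt_trans h4 h3.
Qed.

Lemma cvg_q (R : realType) (E : completeNormedModType R[i]) (ip : E -> E -> R[i])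
  (hE : hilbert_inner ip) (T : Type) (F : set_system T) (FF : Filter F)
  (f : T -> E) a : f @ F --> a -> (fun t => qn ip (f t)) @ F --> qn ip a.
Proof.
move=> h.
have -> : (fun t => qn ip (f t)) = (fun t => Rc (`|f t| * `|f t|)).
  by apply: funext => t; rewrite /qn (ipxx hE) expr2.
rewrite /qn (ipxx hE) expr2; apply: cvg_Re; apply: cvgM; exact: cvg_norm.
Qed.

Lemma ip_expand (R : realType) (E : completeNormedModType R[i]) (ip : E -> E -> R[i])
  (hE : hilbert_inner ip) x z c : ip (x + c *: z) (x + c *: z) =
  ip x x + c^* * ip x z + c * ip z x + c * c^* * ip z z.
Proof. rewrite (ipDl hE) !(ipDr hE) !(ipZl hE) !(ipZr hE). ring. Qed.

Lemma polar (R : realType) (E : completeNormedModType R[i]) (ip : E -> E -> R[i])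
  (hE : hilbert_inner ip) x z : ip x z = 4^-1 * (`|x + 1 *: z| ^+ 2 - `|x + (-1) *: z| ^+ 2
   + 'i * `|x + 'i *: z| ^+ 2 - 'i * `|x + (- 'i) *: z| ^+ 2).
Proof.
have c1 : (-1 : R[i])^* = -1 by rewrite rmorphN rmorph1.
have ci : (-'i : R[i])^* = 'i.
  by rewrite rmorphN; apply/eqP; rewrite eqr_oppLR; apply/eqP; exact: conjCi.
rewrite -!(ipxx hE) !(ip_expand hE) c1 ci conjC1 conjCi.
have ii : 'i * 'i = -1 :> R[i] by rewrite -expr2 sqrCi.
transitivity (ip x z + ('i * 'i + 1) * ((ip z x - ip x z) / 2)).
  by rewrite ii addNr mul0r addr0.
by field.
Qed.

Lemma sqn_cvg (R : realType) (E : completeNormedModType R[i]) (T : Type)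
  (F : set_system T) (FF : Filter F) (f : T -> E) a (c : E) :
  f @ F --> a -> (fun t => (`|f t + c| ^+ 2 : R[i]^o)) @ F --> (`|a + c| ^+ 2 : R[i]^o).
Proof.
move=> h.
have -> : (fun t => (`|f t + c| ^+ 2 : R[i]^o)) = (fun t => `|f t + c| * `|f t + c|).
  by apply: funext => t; rewrite expr2.
rewrite expr2; apply: cvgM; apply: cvg_norm; apply: cvgD => //; exact: cvg_cst.
Qed.

Lemma ipl_cvg (R : realType) (E : completeNormedModType R[i]) (ip : E -> E -> R[i])
  (hE : hilbert_inner ip) (T : Type) (F : set_system T) (FF : Filter F)
  (f : T -> E) a z : f @ F --> a -> (fun t => (ip (f t) z : R[i]^o)) @ F --> (ip a z : R[i]^o).
Proof.
move=> h.
have -> : (fun t => (ip (f t) z : R[i]^o)) = (fun t => 4^-1 * (`|f t + 1 *: z| ^+ 2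
   - `|f t + (-1) *: z| ^+ 2 + 'i * `|f t + 'i *: z| ^+ 2 - 'i * `|f t + (- 'i) *: z| ^+ 2)).
  by apply: funext => t; exact: polar.
rewrite (polar hE a z).
apply: cvgMl_tmp.
apply: cvgB; last by apply: cvgMl_tmp; exact: sqn_cvg.
apply: cvgD; last by apply: cvgMl_tmp; exact: sqn_cvg.
by apply: cvgB; exact: sqn_cvg.
Qed.

Lemma closed_orth (R : realType) (E : completeNormedModType R[i]) (ip : E -> E -> R[i])
  (hE : hilbert_inner ip) z : closed [set x : E | ip x z = 0].
Proof.
have : continuous (fun x => (ip x z : R[i]^o)).
  by move=> x; apply: (ipl_cvg hE); exact: cvg_id.
move/continuous_closedP => /(_ [set (0 : R[i]^o)]) h.
apply: h; apply: accessible_closed_set1; apply: hausdorff_accessible.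
exact: norm_hausdorff.
Qed.

Lemma ReM (R : realType) (x y : R[i]) : Rc (x * y) = Rc x * Rc y - Ic x * Ic y.
Proof. by case: x; case: y. Qed.
Lemma ImM (R : realType) (x y : R[i]) : Ic (x * y) = Rc x * Ic y + Ic x * Rc y.
Proof. by case: x => ? ?; case: y => ? ? /=; rewrite addrC. Qed.
Lemma ImJ (R : realType) (a : R[i]) : Ic (a^*) = - Ic a.
Proof. by case: a => ? ?; rewrite /Num.conj. Qed.
Lemma ImC (R : realType) (a : R) : Ic (a%:C)%C = 0.
Proof. by []. Qed.
Lemma conjRC (R : realType) (s : R) : ((s%:C)%C : R[i])^* = (s%:C)%C.
Proof. by rewrite /Num.conj /= oppr0. Qed.

Lemma inv_le (R : realType) (n N : nat) : (N <= n)%N -> (n.+1%:R^-1 : R) <= N.+1%:R^-1.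
Proof. by move=> h; rewrite lef_pV2 ?posrE ?ltr0n // ler_nat ltnS. Qed.

Lemma qD (R : realType) (E : completeNormedModType R[i]) (ip : E -> E -> R[i])
  (hE : hilbert_inner ip) a b : qn ip (a + b) = qn ip a + qn ip b + 2 * Rc (ip a b).
Proof.
rewrite /qn (ipDl hE) !(ipDr hE) [ip b a](ipC hE) !ReD ReJ; ring.
Qed.

Lemma qB (R : realType) (E : completeNormedModType R[i]) (ip : E -> E -> R[i])
  (hE : hilbert_inner ip) a b : qn ip (a - b) = qn ip a + qn ip b - 2 * Rc (ip a b).
Proof.
rewrite /qn (ipBl hE) !(ipBr hE) [ip b a](ipC hE) !ReB ReJ; ring.
Qed.

Lemma proj_orth (R : realType) (E : completeNormedModType R[i]) (ip : E -> E -> R[i])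
  (hE : hilbert_inner ip) (L : set E) (L0 : L 0)
  (LD : forall a x y, L x -> L y -> L (a *: x + y)) (x : E) :
  exists m, closure L m /\ forall y, L y -> ip (x - m) y = 0.
Proof.
pose S := [set r : R | exists m, L m /\ r = qn ip (x - m)].
have S0 : S !=set0 by exists (qn ip (x - 0)); exists 0.
have Slb : has_lbound S.
  by exists 0 => r [m [_ ->]]; case: (qE hE (x - m)).
set d := inf S.
have dle : forall m, L m -> d <= qn ip (x - m).
  by move=> m Lm; apply: (ge_inf Slb); exists m.
have hm : forall n : nat, exists m, L m /\ qn ip (x - m) < d + n.+1%:R^-1.
  move=> n.
  have [r [m [Lm ->]] hr] := @inf_adherent R S (n.+1%:R^-1) ltac:(by rewrite invr_gt0 ltr0n) (conj S0 Slb).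
  by exists m.
have [ms hms] := boolp.choice hm.
have hc : forall n k, qn ip (ms k - ms n) <= 2 * n.+1%:R^-1 + 2 * k.+1%:R^-1.
  move=> n k.
  have [Ln hn] := hms n; have [Lk hk] := hms k.
  pose mid := 2^-1 *: (ms n + ms k).
  have Lsum : L (ms n + ms k) by rewrite -[ms n]scale1r; exact: LD.
  have Lmid : L mid by have := LD (2^-1) _ _ Lsum L0; rewrite addr0.
  have h2 : (2^-1 + 2^-1 : R[i]) = 1 by field.
  have midmid : mid + mid = ms n + ms k by rewrite -scalerDl h2 scale1r.
  have e1 : x - ms n + (x - ms k) = (x - mid) + (x - mid).
    by rewrite addrACA -opprD [RHS]addrACA -opprD midmid.
  have e2 : x - ms n - (x - ms k) = ms k - ms n.
    by rewrite opprB addrC addrA subrK.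
  have par := qD hE (x - ms n) (x - ms k).
  have par2 := qB hE (x - ms n) (x - ms k).
  rewrite e1 (qD hE) in par.
  rewrite e2 in par2.
  have hmid := dle _ Lmid.
  have hw : Rc (ip (x - mid) (x - mid)) = qn ip (x - mid) by [].
  rewrite hw in par.
  move: hn hk; set en := n.+1%:R^-1; set ek := k.+1%:R^-1 => hn hk.
  lra.
have cv : cvg (ms @ \oo).
  apply: cauchy_cvg; apply: cauchy_exP => eps eps0.
  have [heps _] := real_ge0 (ltW eps0).
  have r0 : 0 < Rc eps by move: eps0; rewrite ltcE => /andP[].
  set r := Rc eps in heps r0.
  have r20 : 0 < r ^+ 2 by rewrite exprn_gt0.
  have hb := @archi_boundP R (4 / r ^+ 2) (ltW (divr_gt0 _ r20)).
  set N := Num.Def.archi_bound _ in hb.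
  exists (ms N).
  apply: filterS (nbhs_infty_ge N) => n hn /=.
  rewrite -ball_normE /= heps.
  apply: (qlt hE) => //.
  have := hc n N; have := inv_le R hn.
  have hN : 4 < r ^+ 2 * N.+1%:R.
    have : (N%:R : R) < N.+1%:R by rewrite ltr_nat.
    move: hb; rewrite ltr_pdivrMr // => hb h. nra.
  have hNi : 4 * N.+1%:R^-1 < r ^+ 2.
    by rewrite ltr_pdivrMr ?ltr0n // mulrC.
  move=> h1 h2; set a := n.+1%:R^-1 in h1 h2; set b := N.+1%:R^-1 in h1 h2 hNi.
  lra.
set m := lim (ms @ \oo).
have cvm : ms @ \oo --> m by exact: cv.
have mcl : closure L m.
  apply: (closed_cvg (closure L) (@closed_closure _ L) _ m cvm).
  by apply: nearW => n; apply: subset_closure; exact: (hms n).1.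
have cvx : (fun n => x - ms n) @ \oo --> x - m.
  by apply: cvgB => //; exact: cvg_cst.
have qm : qn ip (x - m) <= d.
  have cg : (fun n => d + harmonic n) @ \oo --> d + 0.
    by apply: cvgD; [exact: cvg_cst | exact: cvg_harmonic].
  rewrite -[d]addr0.
  have := ler_cvg_to (cvg_q hE _ cvx) cg. apply.
  by apply: nearW => n /=; exact: ltW (hms n).2.
exists m; split => // y Ly.
have key : forall t, qn ip (x - m) <= qn ip (x - m - t *: y).
  move=> t.
  suff : d <= qn ip (x - m - t *: y) by move: qm; apply: le_trans.
  have cvt : (fun n => x - (t *: y + ms n)) @ \oo --> x - (t *: y + m).
    by apply: cvgB; [exact: cvg_cst | apply: cvgD => //; exact: cvg_cst].
  have := ler_cvg_to (cvg_cst d) (cvg_q hE _ cvt).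
  rewrite opprD addrA addrAC; apply.
  by apply: nearW => n; apply: dle; apply: LD => //; exact: (hms n).1.
set w := x - m in key *.
set a := ip w y.
have [hy hQ] := qE hE y.
set Q := qn ip y in hy hQ.
pose s := (Q + 1)^-1.
have s0 : 0 < s by rewrite invr_gt0; lra.
have hs : s * (Q + 1) = 1 by rewrite mulVf //; lra.
have hcj : ((s%:C)%C * a)^* = (s%:C)%C * a^*.
  by rewrite rmorphM; congr (_ * _); exact: conjRC.
have := key ((s%:C)%C * a).
rewrite (qB hE (x - m) ((s%:C)%C * a *: y)) (ipZr hE) [qn ip (_ *: y)]/qn (ipZl hE) (ipZr hE) hy hcj.
rewrite -/a -/w.
rewrite !ReM !ImM !ReJ !ImJ !ReC !ImC => h.
have hN : Rc a ^+ 2 + Ic a ^+ 2 = 0.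
  move: h; set p := Rc a; set q := Ic a => h.
  have h1 : 0 <= s * (p ^+ 2 + q ^+ 2) * (s * Q - 2) by nra.
  have h2 : s * Q - 2 = - 1 - s by nra.
  rewrite h2 in h1; nra.
have [hp hq] : Rc a = 0 /\ Ic a = 0 by split; nra.
move: hp hq; rewrite /a; case: (ip w y) => p q /= -> ->.
by [].
Qed.

Lemma lin_span0 (R : realType) (E : completeNormedModType R[i]) (S : set E) :
  lin_span S 0.
Proof.
exists 0%N, (fun _ => 0), (fun _ => 0); split; first by case.
by rewrite big_ord0.
Qed.

Lemma lin_spanD (R : realType) (E : completeNormedModType R[i]) (S : set E) a x y :
  lin_span S x -> lin_span S y -> lin_span S (a *: x + y).
Proof.
move=> [n1 [c1 [w1 [hw1 ->]]]] [n2 [c2 [w2 [hw2 ->]]]].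
exists (n1 + n2)%N, (fun i : 'I_(n1 + n2) => match fintype.split i with inl j => a * c1 j | inr j => c2 j end),
  (fun i : 'I_(n1 + n2) => match fintype.split i with inl j => w1 j | inr j => w2 j end).
split.
  by move=> i; case: (fintype.split i).
rewrite big_split_ord /= scaler_sumr.
congr (_ + _); apply: eq_bigr => i _.
  by have -> : fintype.split (lshift n2 i) = inl i := unsplitK (inl i); rewrite scalerA.
by have -> : fintype.split (rshift n1 i) = inr i := unsplitK (inr i).
Qed.

Unset Implicit Arguments.

Theorem corollary7p8 (R : realType)
  (H K : completeNormedModType R[i])
  (ipH : H -> H -> R[i]) (ipK : K -> K -> R[i])
  (hH : hilbert_inner ipH) (hK : hilbert_inner ipK)
  (Rop : H -> H) (Rs : H -> H) (u v : H)
  (Vop : K -> K) (Vs : K -> K)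
  (Y : K -> H) (Ys : H -> K)
  (hR : bounded_op Rop) (hRs : is_adjoint ipH ipH Rop Rs)
  (hV : bounded_op Vop) (hVs : is_adjoint ipK ipK Vop Vs)
  (hY : bounded_op Y) (hYs : is_adjoint ipK ipH Y Ys)
  (T : H -> H) (hT : forall x, T x = Rop x + ipH x v *: u)
  (kerY : forall x : K, Y x = 0 -> x = 0)
  (TYYV : forall x : K, T (Y x) = Y (Vop x)) :
  cyclic_vector Rs v -> cyclic_vector Vs (Ys v).
Proof.
move=> cycR.
rewrite /cyclic_vector.
apply/seteqP; split => // k _.
have [m [mcl orth]] := proj_orth hK
  (@lin_span0 _ _ (range (fun n : nat => iter n Vs (Ys v))))
  (@lin_spanD _ _ (range (fun n : nat => iter n Vs (Ys v)))) k.
have hw : forall n, ipK (k - m) (iter n Vs (Ys v)) = 0.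
  move=> n; apply: orth; exists 1%N, (fun _ => 1), (fun _ => iter n Vs (Ys v)); split.
    by move=> _; exists n.
  by rewrite big_ord1 scale1r.
have adjK : forall n z y, ipK z (iter n Vs y) = ipK (iter n Vop z) y.
  by elim=> [//|n IH] z y; rewrite iterS -hVs IH iterSr.
have adjH : forall n z y, ipH z (iter n Rs y) = ipH (iter n Rop z) y.
  by elim=> [//|n IH] z y; rewrite iterS -hRs IH iterSr.
set w := k - m in hw.
have hYit : forall n, Y (iter n Vop w) = iter n T (Y w).
  by elim=> [//|n IH]; rewrite !iterS -TYYV IH.
have hT0 : forall n, ipH (iter n T (Y w)) v = 0.
  by move=> n; rewrite -hYit hYs -adjK; exact: hw.
have hTR : forall n, iter n T (Y w) = iter n Rop (Y w).
  by elim=> [//|n IH]; rewrite !iterS hT hT0 scale0r addr0 IH.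
have hR0 : forall n, ipH (Y w) (iter n Rs v) = 0.
  by move=> n; rewrite adjH -hTR hT0.
have Yw0 : Y w = 0.
  apply: (ip_eq0 hH).
  pose B := [set x | ipH x (Y w) = 0].
  have eqB : B = closure B := (closure_id B).1 (closed_orth hH (z := Y w)).
  have hAB : lin_span (range (fun n : nat => iter n Rs v)) `<=` B.
    move=> z [n [c [ws [hws ->]]]]; rewrite /B /= (ip_suml hH).
    apply: big1 => i _; have [j _ hj] := hws i.
    by rewrite -hj (ipC hH (Y w)) hR0 conjC0 mulr0.
  have : closure (lin_span (range (fun n : nat => iter n Rs v))) (Y w) by rewrite cycR.
  by move/(closure_subset hAB); rewrite -eqB.
have : k - m = 0 := kerY _ Yw0.
by move/eqP; rewrite subr_eq0 => /eqP ->.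
Qed.
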